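(* Let $f:\mathbb{R}^n_{>0}\to\mathbb{R}^n_{>0}$ be order-preserving, homogeneous, and multiplicatively convex. Let $\mathcal{C}$ be the set of strongly connected components of $\mathcal{G}(f)$ and $\mathcal{F}$ the set of final classes of $\mathcal{G}(f)$. Then $$r(f)=\max_{C\in\mathcal{C}}r(f^C_0)\quad\text{and}\quad \lambda(f)=\min_{C\in\mathcal{F}}r(f^C_0).$$
   Context: $[n]=\{1,\dots,n\}$; entrywise order. Order-preserving: $x\le y\Rightarrow f(x)\le f(y)$; homogeneous: $f(tx)=tf(x)$ for $t>0$. Multiplicatively convex: each entry of $\log\circ f\circ\exp$ (entrywise $\log,\exp$) is convex on $\mathbb{R}^n$. $f$ extends continuously to an order-preserving homogeneous map on $\mathbb{R}^n_{\ge0}$, also denoted $f$. $P^J_0(x)_j=x_j$ for $j\in J$, $0$ otherwise; $f^J_0=P^J_0fP^J_0$. For $g$ order-preserving homogeneous on $\mathbb{R}^n_{\ge0}$ (or $\mathbb{R}^n_{>0}$): $r(g)=\inf_{x\in\mathbb{R}^n_{>0}}\max_i g(x)_i/x_i$ and $\lambda(g)=\sup_{x\in\mathbb{R}^n_{>0}}\min_i g(x)_i/x_i$. $\mathcal{G}(f)$ is the directed graph on $[n]$ with an arc $i\to j$ when $\lim_{t\to\infty}f(\exp(te_{\{j\}}))_i=\infty$ ($e_{\{j\}}$ the $j$-th standard basis vector). A final class is a strongly connected component with no arcs leaving it. *)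

(* Defs.v *)
From HB Require Import structures.
From mathcomp Require Import all_boot all_order all_algebra.
From mathcomp Require Import all_classical all_reals all_analysis.
Set Implicit Arguments. Unset Strict Implicit. Unset Printing Implicit Defensive.
Import Order.TTheory GRing.Theory Num.Theory.
Local Open Scope classical_set_scope.
Local Open Scope ring_scope.

Section Defs.
Variables (R : realType) (n : nat).
(* vectors of R^{n+1}, indexed by 'I_n.+1 = [n+1] *)
Notation vec := ('I_n.+1 -> R).

Definition posvec (x : vec) : Prop := forall i, 0 < x i.

Definition order_preserving (f : vec -> vec) : Prop :=
  forall x y, posvec x -> posvec y -> (forall i, x i <= y i) ->
    forall i, f x i <= f y i.

Definition homogeneous (f : vec -> vec) : Prop :=
  forall x t, posvec x -> 0 < t -> f (fun i => t * x i) = (fun i => t * f x i).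

Definition vexp (u : vec) : vec := fun i => expR (u i).

(* each entry of log o f o exp is convex on R^{n+1} *)
Definition mult_convex (f : vec -> vec) : Prop :=
  forall i (u v : vec) (a : R), 0 <= a <= 1 ->
    ln (f (vexp (fun j => a * u j + (1 - a) * v j)) i)
      <= a * ln (f (vexp u) i) + (1 - a) * ln (f (vexp v) i).

(* continuous extension of f to the closed cone:
   ext f x = lim_{eps -> 0+} f (x + eps 1) = inf_{eps>0} f (x + eps 1) (entrywise) *)
Definition ext (f : vec -> vec) (x : vec) : vec :=
  fun i => inf [set f (fun j => x j + e) i | e in [set e : R | 0 < e]].

Definition proj0 (J : set 'I_n.+1) (x : vec) : vec :=
  fun j => if j \in J then x j else 0.

Definition restr0 (f : vec -> vec) (J : set 'I_n.+1) : vec -> vec :=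
  fun x => proj0 J (ext f (proj0 J x)).

Definition max_ratio (g : vec -> vec) (x : vec) : R :=
  \big[Num.max/(g x ord0 / x ord0)]_(i < n.+1) (g x i / x i).
Definition min_ratio (g : vec -> vec) (x : vec) : R :=
  \big[Num.min/(g x ord0 / x ord0)]_(i < n.+1) (g x i / x i).

Definition cw_r (g : vec -> vec) : R :=
  inf [set max_ratio g x | x in posvec].
Definition cw_lambda (g : vec -> vec) : R :=
  sup [set min_ratio g x | x in posvec].

Definition exp_e (t : R) (j : 'I_n.+1) : vec :=
  fun k => if k == j then expR t else 1.

Definition gf_arc (f : vec -> vec) (i j : 'I_n.+1) : Prop :=
  (fun t : R => f (exp_e t j) i) @ +oo --> +oo.

Inductive reach (A : 'I_n.+1 -> 'I_n.+1 -> Prop) : 'I_n.+1 -> 'I_n.+1 -> Prop :=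
| reach_refl i : reach A i i
| reach_step i j k : A i j -> reach A j k -> reach A i k.

Definition is_scc (A : 'I_n.+1 -> 'I_n.+1 -> Prop) (C : set 'I_n.+1) : Prop :=
  exists i, C = [set j | reach A i j /\ reach A j i].

Definition is_final (A : 'I_n.+1 -> 'I_n.+1 -> Prop) (C : set 'I_n.+1) : Prop :=
  is_scc A C /\ (forall i j, C i -> A i j -> C j).

End Defs.

(* Main.v *)
Require Import Defs.
From HB Require Import structures.
From mathcomp Require Import all_boot all_order all_algebra.
From mathcomp Require Import all_classical all_reals all_analysis.
From mathcomp Require Import ring lra.
Import Order.TTheory GRing.Theory Num.Theory.
Local Open Scope classical_set_scope.
Local Open Scope ring_scope.
Set Implicit Arguments. Unset Strict Implicit. Unset Printing Implicit Defensive.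

Section Generic.
Variable R : realType.

Lemma fin_unif_nat (T : finType) (P : T -> nat -> Prop) :
  (forall x d d', P x d -> (d <= d')%N -> P x d') ->
  (forall x, exists d, P x d) -> exists D, forall x, P x D.
Proof.
move=> mono ex.
suff: forall s : seq T, exists D, forall x, x \in s -> P x D.
  by case/(_ (enum T)) => D HD; exists D => x; apply: HD; rewrite mem_enum.
elim=> [|a s [D HD]]; first by exists 0%N.
have [d Hd] := ex a.
exists (maxn D d) => x; rewrite inE => /orP[/eqP->|xs].
  by apply: mono Hd _; rewrite leq_maxr.
by apply: mono (HD _ xs) _; rewrite leq_maxl.
Qed.

Lemma fin_unif_pos (T : finType) (P : T -> R -> Prop) :
  (forall x e e', P x e -> 0 < e' <= e -> P x e') ->
  (forall x, exists2 e, 0 < e & P x e) -> exists2 e, 0 < e & forall x, P x e.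
Proof.
move=> mono ex.
suff: forall s : seq T, exists2 e, 0 < e & forall x, x \in s -> P x e.
  by case/(_ (enum T)) => e e0 He; exists e => // x; apply: He; rewrite mem_enum.
elim=> [|a s [e e0 He]]; first by exists 1.
have [d d0 Hd] := ex a.
exists (Num.min e d) => [|x]; first by rewrite lt_min e0 d0.
rewrite inE => /orP[/eqP->|xs].
  by apply: mono Hd _; rewrite lt_min e0 d0 ge_min lexx orbT.
by apply: mono (He _ xs) _; rewrite lt_min e0 d0 ge_min lexx.
Qed.

Lemma fin_unif_cK (T : finType) (P : T -> R -> R -> Prop) :
  (forall x c K c' K', P x c K -> 0 < c' <= c -> K <= K' -> P x c' K') ->
  (forall x, exists c K, 0 < c /\ P x c K) ->
  exists c K, [/\ 0 < c, c <= 1, 0 <= K & forall x, P x c K].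
Proof.
move=> mono ex.
suff: forall s : seq T, exists c K, [/\ 0 < c, c <= 1, 0 <= K &
    forall x, x \in s -> P x c K].
  case/(_ (enum T)) => c [K [c0 c1 K0 He]]; exists c, K; split => // x.
  by apply: He; rewrite mem_enum.
elim=> [|a s [c [K [c0 c1 K0 He]]]]; first by exists 1, 0; split.
have [d [L [d0 Hd]]] := ex a.
exists (Num.min c d), (Num.max K L); split.
- by rewrite lt_min c0 d0.
- by rewrite ge_min c1.
- by rewrite le_max K0.
move=> x; rewrite inE => /orP[/eqP->|xs].
  by apply: mono Hd _ _; rewrite ?lt_min ?c0 ?d0 ?ge_min ?lexx ?orbT ?le_max ?lexx ?orbT.
by apply: mono (He _ xs) _ _; rewrite ?lt_min ?c0 ?d0 ?ge_min ?lexx ?le_max ?lexx.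
Qed.

Lemma convex_bounded_const (phi : R -> R) (B : R) :
  (forall a s t, 0 <= a <= 1 -> phi (a * s + (1 - a) * t) <= a * phi s + (1 - a) * phi t) ->
  (forall s t, s <= t -> phi s <= phi t) ->
  (forall t, 0 <= t -> phi t <= B) ->
  forall s, 0 <= s -> phi s = phi 0.
Proof.
move=> cv mono bd s s0.
apply/eqP; rewrite eq_le (mono 0 s s0) andbT leNgt; apply/negP => hs.
have spos : 0 < s.
  rewrite lt_neqAle s0 andbT; apply/negP => /eqP s0'.
  by move: hs; rewrite -s0' ltxx.
set d := phi s - phi 0.
have d0 : 0 < d by rewrite subr_gt0.
have B0 : phi 0 <= B by apply: bd.
set T := s + s * (B - phi 0) / d + 1.
have Tpos : s < T.
  rewrite /T -addrA ltrDl; apply: ltr_wpDl => //.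
  by apply: divr_ge0 => //; [apply: mulr_ge0 => //; rewrite subr_ge0|apply: ltW].
have T0 : 0 < T by apply: lt_trans Tpos.
have a01 : 0 <= s / T <= 1.
  by rewrite divr_ge0 ?(ltW T0) //= ler_pdivrMr // mul1r ltW.
have := cv (s / T) T 0 a01.
rewrite mulr0 addr0 divfK ?gt_eqF //.
have hT := bd T (ltW T0).
move=> h.
have h2 : phi s <= s / T * B + (1 - s / T) * phi 0.
  apply: (le_trans h); rewrite lerD2r; apply: ler_wpM2l => //.
  by case/andP: a01.
have h3 : T * d <= s * (B - phi 0).
  have : T * phi s <= s * B + (T - s) * phi 0.
    have := ler_wpM2l (ltW T0) h2.
    rewrite mulrDr mulrA mulrCA divff ?gt_eqF // mulr1 mulrA mulrBr mulr1.
    by rewrite mulrCA divff ?gt_eqF // mulr1.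
  rewrite /d mulrBr; lra.
have : T * d = s * d + s * (B - phi 0) + d.
  by rewrite /T; field; rewrite gt_eqF.
move=> e; rewrite e in h3.
have : 0 < s * d by apply: mulr_gt0.
lra.
Qed.


Lemma convex_lin_lower (phi : R -> R) (t1 : R) :
  (forall a s t, 0 <= a <= 1 -> phi (a * s + (1 - a) * t) <= a * phi s + (1 - a) * phi t) ->
  (forall s t, s <= t -> phi s <= phi t) ->
  0 < t1 -> phi 0 + 1 <= phi t1 ->
  forall t, 0 <= t -> t / t1 - 1 + phi 0 <= phi t.
Proof.
move=> cv mono t10 h1 t t0.
have e : t / t1 * t1 = t by rewrite divfK // gt_eqF.
case: (leP t t1) => tt1.
  have : t / t1 <= 1 by rewrite ler_pdivrMr // mul1r.
  have := mono 0 t t0; lra.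
have tp : 0 < t by apply: lt_trans tt1.
have a01 : 0 <= t1 / t <= 1.
  by rewrite divr_ge0 ?(ltW t10) ?(ltW tp) //= ler_pdivrMr // mul1r ltW.
have := cv (t1 / t) t 0 a01.
rewrite mulr0 addr0 divfK ?gt_eqF // => h.
have e2 : t * (t1 / t) = t1 by rewrite mulrC divfK // gt_eqF.
have h3 : t * phi t1 <= t1 * phi t + (t - t1) * phi 0.
  have := ler_wpM2l (ltW tp) h.
  rewrite mulrDr mulrA e2 mulrA mulrBr mulr1 e2 => h'.
  by apply: (le_trans h'); rewrite lerD2l.
have h4 : t * (phi 0 + 1) <= t * phi t1 by apply: ler_wpM2l => //; apply: ltW.
nra.
Qed.

Lemma spread_bound (M m : nat -> R) (D : nat) A E c : (0 < D)%N -> 0 < c -> c <= 1 ->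
  (forall k, M (k + D)%N <= M k + A) ->
  (forall k, m k + c * (M k - m k) - E <= m (k + D)%N) ->
  exists B, forall k, M k - m k <= B.
Proof.
move=> D0 c0 c1 hM hm.
set B := Num.max (\big[Num.max/0]_(r < D) (M r - m r)) ((A + E) / c).
exists B => k; elim/ltn_ind: k => k IH.
have B1 : \big[Num.max/0]_(r < D) (M r - m r) <= B by rewrite le_max lexx.
have B2 : (A + E) / c <= B by rewrite le_max lexx orbT.
case: (ltnP k D) => kD.
  apply: le_trans B1.
  exact: (@le_bigmax _ _ _ 0 (fun r : 'I_D => M r - m r) (Ordinal kD)).
have e : k = ((k - D) + D)%N by rewrite subnK.
have kpos : (0 < k)%N by apply: leq_trans kD.
have IH' : M (k - D)%N - m (k - D)%N <= B by apply: IH; rewrite ltn_subrL D0 kpos.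
have h1 := hM (k - D)%N; have h2 := hm (k - D)%N; rewrite -e in h1 h2.
set s' := M (k - D)%N - m (k - D)%N in IH'.
have h3 : (1 - c) * s' <= (1 - c) * B by apply: ler_wpM2l; rewrite ?subr_ge0.
have h4 : A + E <= c * B.
  by rewrite mulrC -ler_pdivrMr.
rewrite /s' in h3; lra.
Qed.

End Generic.

Section Graph.
Variables (n : nat) (A : 'I_n.+1 -> 'I_n.+1 -> Prop).

Inductive reachn : nat -> 'I_n.+1 -> 'I_n.+1 -> Prop :=
| rn0 i : reachn 0 i i
| rnS d i j k : A i j -> reachn d j k -> reachn d.+1 i k.

Lemma reach_trans i j k : reach A i j -> reach A j k -> reach A i k.
Proof.
elim=> [//|i' j' k' a _ IH] h; apply: reach_step a _; exact: IH.
Qed.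

Lemma reach1 i j : A i j -> reach A i j.
Proof. by move=> a; apply: reach_step a (reach_refl _ _). Qed.

Lemma reach_reachn i j : reach A i j -> exists d, reachn d i j.
Proof.
elim=> [i'|i' j' k' a _ [d IH]]; first by exists 0%N; constructor.
by exists d.+1; apply: rnS a IH.
Qed.

Lemma reachn_reach d i j : reachn d i j -> reach A i j.
Proof. by elim=> [i'|d' i' j' k' a _ IH]; [exact: reach_refl|exact: reach_step a IH]. Qed.

Lemma reach_unif : exists D, (1 <= D)%N /\
  forall i j, reach A i j -> exists d, (d <= D)%N /\ reachn d i j.
Proof.
have := @fin_unif_nat ('I_n.+1 * 'I_n.+1)%type
  (fun p D => reach A p.1 p.2 -> exists d, (d <= D)%N /\ reachn d p.1 p.2).
case.
- move=> [i j] d d' /= H dd' r; have [e [ed re]] := H r.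
  by exists e; split => //; apply: leq_trans dd'.
- move=> [i j] /=; have [r|nr] := pselect (reach A i j).
    by have [d rd] := reach_reachn r; exists d => _; exists d.
  by exists 0%N => /nr.
move=> D HD; exists D.+1; split => // i j r.
have [d [dD rd]] := HD (i, j) r; exists d; split => //; exact: leqW.
Qed.

Definition closed (S : {set 'I_n.+1}) := forall i j, i \in S -> A i j -> j \in S.

Lemma closed_reach S i j : closed S -> i \in S -> reach A i j -> j \in S.
Proof. by move=> cS iS r; elim: r iS => // i' j' k' a _ IH /cS /(_ a). Qed.

Definition scc (i : 'I_n.+1) : {set 'I_n.+1} :=
  (finset (fun j => `[< reach A i j /\ reach A j i >])).

Lemma in_scc i j : (j \in scc i) <-> (reach A i j /\ reach A j i).
Proof. by rewrite inE; split => /asboolP. Qed.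

Lemma scc_self i : i \in scc i.
Proof. by apply/in_scc; split; apply: reach_refl. Qed.

Lemma top_class S i0 : closed S -> i0 \in S ->
  exists i, [/\ i \in S, scc i \subset S & closed (S :\: scc i)].
Proof.
move=> cS i0S.
pose F i := #|[set j in S | `[< reach A j i >]]|.
case: (@arg_minnP _ i0 (mem S) F i0S) => i iS imin.
exists i; split => //.

  by apply/fintype.subsetP => j /in_scc [r _]; apply: closed_reach r.
move=> k l; rewrite inE => /andP[kC kS] a.
rewrite inE (cS k l kS a) andbT; apply/negP => /in_scc [ril rli].
move/negP: kC; apply; apply/in_scc; split; last first.
  by apply: reach_trans (reach1 a) rli.
have rki : reach A k i by apply: reach_trans (reach1 a) rli.
have sub : [set j in S | `[< reach A j k >]] \subset [set j in S | `[< reach A j i >]].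
  apply/fintype.subsetP => x; rewrite !inE => /andP[-> /asboolP r] /=.
  by apply/asboolP; apply: reach_trans r rki.
have : [set j in S | `[< reach A j k >]] == [set j in S | `[< reach A j i >]].
  by rewrite eqEcard sub /=; apply: imin.
move/eqP => e.
have : i \in [set j in S | `[< reach A j i >]].
  by rewrite inE; apply/andP; split => //; apply/asboolP; apply: reach_refl.
by rewrite -e inE => /andP[_ /asboolP].
Qed.

Lemma final_exists : exists i, closed (scc i).
Proof.
pose F i := #|(finset (fun j => `[< reach A i j >]))|.
case: (@arg_minnP _ ord0 xpredT F isT) => i _ imin.
exists i => k l /in_scc [rik rki] a.
have ril : reach A i l by apply: reach_trans rik (reach1 a).
apply/in_scc; split => //.
have sub : (finset (fun j => `[< reach A l j >])) \subset (finset (fun j => `[< reach A i j >])).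
  apply/fintype.subsetP => x; rewrite !inE /= => r.
  exact: reach_trans ril r.
have : (finset (fun j => `[< reach A l j >])) == (finset (fun j => `[< reach A i j >])).
  by rewrite eqEcard sub /=; apply: imin.
move/eqP => e.
have : i \in (finset (fun j => `[< reach A i j >])) by rewrite inE; apply/asboolP; apply: reach_refl.
by rewrite -e inE => /asboolP.
Qed.

End Graph.

Section Main.
Variables (R : realType) (n : nat).
Notation vec := ('I_n.+1 -> R).
Variable f : vec -> vec.
Hypotheses (fpos : forall x, posvec x -> posvec (f x))
  (fop : order_preserving f) (fhom : homogeneous f) (fconv : mult_convex f).

Definition G (u : vec) : vec := fun i => ln (f (vexp u) i).
Definition vlog (x : vec) : vec := fun i => ln (x i).
Definition dlt (j : 'I_n.+1) : vec := fun k => (k == j)%:R.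
Notation arc := (gf_arc f).

Lemma vexp_pos (u : vec) : posvec (vexp u).
Proof. by move=> i; exact: expR_gt0. Qed.

Lemma fG (u : vec) i : f (vexp u) i = expR (G u i).
Proof. by rewrite /G lnK // posrE; apply: fpos; apply: vexp_pos. Qed.

Lemma vexp_vlog (x : vec) : posvec x -> vexp (vlog x) = x.
Proof. by move=> px; apply: funext => i; rewrite /vexp /vlog lnK // posrE. Qed.

Lemma f_G (x : vec) i : posvec x -> f x i = expR (G (vlog x) i).
Proof. by move=> px; rewrite -fG vexp_vlog. Qed.

Lemma G_mono (u v : vec) : (forall k, u k <= v k) -> forall i, G u i <= G v i.
Proof.
move=> uv i; rewrite /G ler_ln ?posrE; try by apply: fpos; apply: vexp_pos.
apply: fop; try exact: vexp_pos.
by move=> k; rewrite /vexp ler_expR.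
Qed.

Lemma G_shift (u : vec) t i : G (fun k => u k + t) i = G u i + t.
Proof.
rewrite /G.
have -> : vexp (fun k => u k + t) = (fun k => expR t * vexp u k).
  by apply: funext => k; rewrite /vexp expRD mulrC.
rewrite fhom; [|exact: vexp_pos|exact: expR_gt0].
rewrite lnM ?posrE ?expR_gt0 //; last by apply: fpos; apply: vexp_pos.
by rewrite expRK addrC.
Qed.

Lemma G_line (u w : vec) i a s t : 0 <= a <= 1 ->
  G (fun k => u k + (a * s + (1 - a) * t) * w k) i <=
  a * G (fun k => u k + s * w k) i + (1 - a) * G (fun k => u k + t * w k) i.
Proof.
move=> a01; have := fconv i (fun k => u k + s * w k) (fun k => u k + t * w k) a01.
suff -> : (fun j => a * (u j + s * w j) + (1 - a) * (u j + t * w j)) =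
          (fun k => u k + (a * s + (1 - a) * t) * w k) by [].
by apply: funext => k; ring.
Qed.

Lemma exp_e_dlt t j : vexp (fun k => t * dlt j k) = exp_e t j.
Proof.
apply: funext => k; rewrite /vexp /exp_e /dlt.
by case: (k == j); rewrite ?mulr1 ?mulr0 ?expR0.
Qed.

Lemma f_exp_e_mono i j s t : s <= t -> f (exp_e s j) i <= f (exp_e t j) i.
Proof.
move=> st; rewrite -!exp_e_dlt !fG ler_expR; apply: G_mono => k.
rewrite /dlt; case: (k == j); rewrite ?mulr1 ?mulr0 //.
Qed.

Lemma noarc_bounded i j : ~ arc i j -> exists B, forall t, f (exp_e t j) i <= B.
Proof.
move=> na; apply: contrapT => nb; apply: na; apply/cvgryPge => A.
have : ~ (forall t, f (exp_e t j) i <= A).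
  by move=> h; apply: nb; exists A.
move=> /existsNP [t0 /negP]; rewrite -ltNge => ht0.
exists t0; split; first exact: num_real.
move=> t /ltW t0t; apply: ltW; apply: (lt_le_trans ht0); exact: f_exp_e_mono.
Qed.

Lemma arc_large i j : arc i j -> forall A, exists t, 0 < t /\ A <= f (exp_e t j) i.
Proof.
move=> a A; have := cvgry_ge a A => -[M [_ HM]].
have M1 : M <= Num.max M 0 by rewrite le_max lexx.
have M2 : 0 <= Num.max M 0 by rewrite le_max lexx orbT.
exists (Num.max M 0 + 1); split; first lra.
apply: HM; lra.
Qed.


Definition vmax (u : vec) := \big[Num.max/u ord0]_k u k.
Definition vmin (u : vec) := \big[Num.min/u ord0]_k u k.

Lemma le_vmax (u : vec) k : u k <= vmax u.
Proof. exact: le_bigmax. Qed.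
Lemma vmin_le (u : vec) k : vmin u <= u k.
Proof. exact: bigmin_le. Qed.
Lemma vmax_attained (u : vec) : exists k, vmax u = u k.
Proof.
case: (@arg_maxP _ _ 'I_n.+1 ord0 xpredT u isT) => k _ hk.
exists k; apply/eqP; rewrite eq_le le_vmax andbT.
by apply: bigmax_le => [|i _]; apply: hk.
Qed.
Lemma vmin_attained (u : vec) : exists k, vmin u = u k.
Proof.
case: (@arg_minP _ _ 'I_n.+1 ord0 xpredT u isT) => k _ hk.
exists k; apply/eqP; rewrite eq_le vmin_le /=.
by apply: le_bigmin => [|i _]; apply: hk.
Qed.

Lemma exp_e_pos (t : R) (j : 'I_n.+1) : posvec (exp_e t j).
Proof. rewrite -exp_e_dlt; exact: vexp_pos. Qed.

Lemma dlt_ge0 (j k : 'I_n.+1) : 0 <= dlt j k.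
Proof. by rewrite /dlt; case: (k == j). Qed.

Lemma G_dlt (t : R) (j i : 'I_n.+1) : G (fun k => t * dlt j k) i = ln (f (exp_e t j) i).
Proof. by rewrite /G exp_e_dlt. Qed.

Lemma noarc_indep i j : ~ arc i j ->
  forall (u : vec) s, G (fun k => u k + s * dlt j k) i = G u i.
Proof.
move=> na.
have [B HB] := noarc_bounded na.
have key : forall (u : vec) s, 0 <= s -> G (fun k => u k + s * dlt j k) i = G u i.
  move=> u s s0.
  pose phi := fun t => G (fun k => u k + t * dlt j k) i.
  have -> : G u i = phi 0.
    by rewrite /phi; congr (G _ i); apply: funext => k; rewrite mul0r addr0.
  apply: (@convex_bounded_const _ phi (vmax u + ln B)) => //.
  - by move=> a s' t a01; exact: G_line.
  - move=> s' t st; apply: G_mono => k; rewrite lerD2l.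
    by apply: ler_wpM2r => //; rewrite /dlt; case: (k == j).
  - move=> t t0; rewrite /phi.
    apply: (@le_trans _ _ (G (fun k => t * dlt j k + vmax u) i)).
      by apply: G_mono => k; rewrite addrC lerD2l le_vmax.
    have fp : 0 < f (exp_e t j) i by apply: fpos; exact: exp_e_pos.
    rewrite G_shift G_dlt addrC lerD2l ler_ln ?posrE ?HB //.
    exact: (lt_le_trans fp (HB t)).
move=> u s; case: (leP 0 s) => [s0|s0]; first exact: key.
have := key (fun k => u k + s * dlt j k) (- s); rewrite oppr_ge0 (ltW s0) => /(_ isT).
move=> <-; congr (G _ i); apply: funext => k; ring.
Qed.

Lemma G_local (u v : vec) i : (forall k, arc i k -> u k = v k) -> G u i = G v i.
Proof.
move=> uv.
pose w (m : nat) : vec := fun k => if (k < m)%N then v k else u k.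
suff: forall m, G (w m) i = G u i.
  move/(_ n.+1) => <-; congr (G _ i); apply: funext => k; by rewrite /w ltn_ord.
elim=> [|m IH].
  by congr (G _ i); apply: funext => k; rewrite /w ltn0.
rewrite -IH.
case: (ltnP m n.+1) => [mn|mn]; last first.
  congr (G _ i); apply: funext => k; rewrite /w.
  by rewrite (leq_trans (ltn_ord k) mn) (ltn_trans (ltn_ord k)) // ltnS.
pose km := Ordinal mn.
have -> : w m.+1 = (fun k => w m k + (v km - u km) * dlt km k).
  apply: funext => k; rewrite /w /dlt ltnS leq_eqVlt.
  case: (eqVneq k km) => [->|nk] /=.
    by rewrite eqxx ltnn /= mulr1 addrC subrK.
  have -> : (nat_of_ord k == m) = false.
    by apply/negP => /eqP e; move/eqP: nk; apply; apply: val_inj.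
  by rewrite mulr0 addr0.
have [a|na] := pselect (arc i km).
  rewrite (uv _ a) subrr; congr (G _ i); apply: funext => k; by rewrite mul0r addr0.
exact: noarc_indep.
Qed.

Lemma f_local (x y : vec) i : posvec x -> posvec y ->
  (forall k, arc i k -> x k = y k) -> f x i = f y i.
Proof.
move=> px py xy; rewrite (f_G i px) (f_G i py); congr expR.
by apply: G_local => k /xy; rewrite /vlog => ->.
Qed.

Lemma arc_linear i j : arc i j -> exists c K, 0 < c /\
  forall t, 0 <= t -> c * t - K <= G (fun k => t * dlt j k) i.
Proof.
move=> a.
pose phi := fun s => G (fun k => (fun _ => 0) k + s * dlt j k) i.
have ephi : forall s, phi s = G (fun k => s * dlt j k) i.
  by move=> s; rewrite /phi; congr (G _ i); apply: funext => k; rewrite add0r.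
have [t1 [t10 ht1]] := arc_large a (expR (phi 0 + 1)).
have h1 : phi 0 + 1 <= phi t1.
  have fp : 0 < f (exp_e t1 j) i by apply: fpos; exact: exp_e_pos.
  by rewrite (ephi t1) G_dlt -ler_expR lnK // posrE.
have H : forall t, 0 <= t -> t / t1 - 1 + phi 0 <= phi t.
  apply: convex_lin_lower => //.
  - by move=> a' s t a01; apply: G_line.
  - move=> s t st; apply: G_mono => k; rewrite lerD2l.
    by apply: ler_wpM2r => //; rewrite /dlt; case: (k == j).
exists (t1^-1), (1 - phi 0); split; first by rewrite invr_gt0.
move=> t t0; rewrite -ephi; have := H t t0; rewrite mulrC; lra.
Qed.

Lemma arc_unif : exists c K, [/\ 0 < c, c <= 1, 0 <= K &
  forall i j, arc i j -> forall t, 0 <= t -> c * t - K <= G (fun k => t * dlt j k) i].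
Proof.
have := @fin_unif_cK _ ('I_n.+1 * 'I_n.+1)%type
  (fun p c K => arc p.1 p.2 -> forall t, 0 <= t -> c * t - K <= G (fun k => t * dlt p.2 k) p.1).
case.
- move=> [i j] c K c' K' /= H /andP[c'0 c'c] KK' a t t0.
  apply: le_trans (H a t t0); have : c' * t <= c * t by apply: ler_wpM2r.
  lra.
- move=> [i j] /=; have [a|na] := pselect (arc i j).
    by have [c [K [c0 H]]] := arc_linear a; exists c, K; split.
  by exists 1, 0; split => // /na.
move=> c [K [c0 c1 K0 H]]; exists c, K; split => // i j a t t0.
exact: (H (i, j) a t t0).
Qed.

Lemma prop_lower c K (u : vec) i j m :
  (forall i j, arc i j -> forall t, 0 <= t -> c * t - K <= G (fun k => t * dlt j k) i) ->
  arc i j -> (forall k, m <= u k) -> m + c * (u j - m) - K <= G u i.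
Proof.
move=> H a mu.
apply: (@le_trans _ _ (G (fun k => (u j - m) * dlt j k + m) i)); last first.
  apply: G_mono => k; rewrite /dlt; case: (eqVneq k j) => [->|_].
    by rewrite mulr1 subrK.
  by rewrite mulr0 add0r.
rewrite G_shift.
have := H i j a (u j - m); rewrite subr_ge0 => /(_ (mu j)); lra.
Qed.

Definition one : vec := fun _ => 1.
Lemma one_pos : posvec one. Proof. by move=> i; rewrite /one ltr01. Qed.

Lemma ratio_le_max (g : vec -> vec) x i : g x i / x i <= max_ratio g x.
Proof. exact: le_bigmax. Qed.

Lemma max_ratio_le (g : vec -> vec) x c : (forall i, g x i / x i <= c) -> max_ratio g x <= c.
Proof. by move=> h; apply: bigmax_le => // i _. Qed.

Lemma min_le_ratio (g : vec -> vec) x i : min_ratio g x <= g x i / x i.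
Proof. exact: bigmin_le. Qed.

Lemma le_min_ratio (g : vec -> vec) x c : (forall i, c <= g x i / x i) -> c <= min_ratio g x.
Proof. by move=> h; apply: le_bigmin => // i _. Qed.

Lemma cw_r_le (g : vec -> vec) x : (forall y, posvec y -> 0 <= max_ratio g y) ->
  posvec x -> cw_r g <= max_ratio g x.
Proof.
move=> h px; apply: ge_inf; last by exists x.
by exists 0 => _ [y py <-]; apply: h.
Qed.

Lemma cw_r_ge (g : vec -> vec) c : (forall x, posvec x -> c <= max_ratio g x) -> c <= cw_r g.
Proof.
move=> h; apply: lb_le_inf; first by exists (max_ratio g one), one => //; exact: one_pos.
by move=> _ [y py <-]; apply: h.
Qed.

Lemma cw_r_approx (g : vec -> vec) c : cw_r g < c -> exists2 x, posvec x & max_ratio g x < c.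
Proof.
move=> h; have := @inf_lt _ [set max_ratio g x | x in @posvec R n] c.
case.
- by exists (max_ratio g one), one => //; exact: one_pos.
- exact: h.
by move=> _ [x px <-] hx; exists x.
Qed.

Lemma cw_lambda_ge (g : vec -> vec) x B : (forall y, posvec y -> min_ratio g y <= B) ->
  posvec x -> min_ratio g x <= cw_lambda g.
Proof.
move=> h px; apply: ub_le_sup; last by exists x.
by exists B => _ [y py <-]; apply: h.
Qed.

Lemma cw_lambda_le (g : vec -> vec) c : (forall x, posvec x -> min_ratio g x <= c) -> cw_lambda g <= c.
Proof.
move=> h; apply: ge_sup; first by exists (min_ratio g one), one => //; exact: one_pos.
by move=> _ [y py <-]; apply: h.
Qed.

Lemma inf_le_approx (E : set R) a : has_lbound E ->
  (forall eta, 0 < eta -> exists2 y, E y & y <= a + eta) -> inf E <= a.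
Proof.
move=> lb h; rewrite leNgt; apply/negP => ha.
have eta0 : 0 < (inf E - a) / 2 by rewrite divr_gt0 // subr_gt0.
have [y Ey hy] := h _ eta0.
have := ge_inf lb Ey; lra.
Qed.

Lemma vmin_pos x : posvec x -> 0 < vmin x.
Proof. by move=> px; have [k ->] := vmin_attained x; apply: px. Qed.

Lemma ext_ge0 (z : vec) i : (forall j, 0 <= z j) -> 0 <= ext f z i.
Proof.
move=> z0; apply: lb_le_inf; first by exists (f (fun j => z j + 1) i), 1 => //; exact: ltr01.
move=> _ [e /= e0 <-]; apply: ltW; apply: fpos => j.
by apply: ltr_wpDl.
Qed.

Lemma f_hom_le (x : vec) e i : posvec x -> 0 < e ->
  f (fun j => x j + e) i <= (1 + e / vmin x) * f x i.
Proof.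
move=> px e0; have m0 := vmin_pos px.
have t0 : 0 < 1 + e / vmin x by apply: ltr_wpDr; [apply: ltW; apply: divr_gt0|exact: ltr01].
apply: (@le_trans _ _ (f (fun j => (1 + e / vmin x) * x j) i)); last by rewrite (fhom px t0).
apply: fop.
- by move=> j; apply: ltr_wpDr; [apply: ltW|apply: px].
- by move=> j; apply: mulr_gt0 => //; apply: px.
move=> j; rewrite mulrDl mul1r lerD2l.
have hm := vmin_le x j.
have q : 0 <= e / vmin x by apply: divr_ge0; apply: ltW.
by have := ler_wpM2l q hm; rewrite divfK ?gt_eqF.
Qed.

Lemma ext_le_f (z x : vec) i : posvec x -> (forall j, 0 <= z j <= x j) -> ext f z i <= f x i.
Proof.
move=> px zx; apply: inf_le_approx.
  exists 0 => _ [e /= e0 <-]; apply: ltW; apply: fpos => j.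
  by apply: ltr_wpDl => //; case/andP: (zx j).
move=> eta eta0.
have fx0 : 0 < f x i by apply: fpos.
have m0 := vmin_pos px.
set e := eta * vmin x / f x i.
have e0 : 0 < e by apply: divr_gt0 => //; apply: mulr_gt0.
exists (f (fun j => z j + e) i); first by exists e.
apply: (@le_trans _ _ (f (fun j => x j + e) i)).
  apply: fop.
  - by move=> j; apply: ltr_wpDl => //; case/andP: (zx j).
  - by move=> j; apply: ltr_wpDl => //; apply: ltW; apply: px.
  - by move=> j; rewrite lerD2r; case/andP: (zx j).
apply: (le_trans (f_hom_le i px e0)).
have -> : (1 + e / vmin x) * f x i = f x i + eta.
  by rewrite /e; field; rewrite !gt_eqF.
by [].
Qed.

Lemma restr0_ge0 (C : set 'I_n.+1) (x : vec) i : (forall j, 0 <= x j) -> 0 <= restr0 f C x i.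
Proof.
move=> x0; rewrite /restr0 /proj0; case: ifP => // _; apply: ext_ge0 => j.
by case: ifP.
Qed.

Lemma restr0_max_ge0 (C : set 'I_n.+1) (y : vec) : posvec y -> 0 <= max_ratio (restr0 f C) y.
Proof.
move=> py; apply: le_trans (ratio_le_max _ _ ord0).
apply: divr_ge0; last exact: ltW.
by apply: restr0_ge0 => j; apply: ltW.
Qed.

Lemma restr0_le_f (C : set 'I_n.+1) (x : vec) i : posvec x -> restr0 f C x i <= f x i.
Proof.
move=> px; rewrite /restr0 /proj0; case: ifP => _; last exact: ltW (fpos px i).
by apply: ext_le_f => // j; case: ifP => _; rewrite ?lexx ?andbT ?ltW //.
Qed.

Lemma r_sub_le (C : set 'I_n.+1) : cw_r (restr0 f C) <= cw_r f.
Proof.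
apply: cw_r_ge => x px.
apply: le_trans (cw_r_le (@restr0_max_ge0 C) px) _.
apply: max_ratio_le => i; apply: le_trans (ratio_le_max f x i).
apply: ler_wpM2r; first by rewrite invr_ge0 ltW.
exact: restr0_le_f.
Qed.

Lemma r_le_expR (C : set 'I_n.+1) g (v : vec) :
  (forall i, i \in C -> G v i <= v i + g) -> cw_r (restr0 f C) <= expR g.
Proof.
move=> h; apply: le_trans (cw_r_le (@restr0_max_ge0 C) (vexp_pos v)) _.
apply: max_ratio_le => i; rewrite ler_pdivrMr; last exact: vexp_pos.
rewrite /restr0 /proj0; case: ifPn => iC; last first.
  by apply: mulr_ge0; apply: ltW; [exact: expR_gt0|exact: vexp_pos].
apply: (@le_trans _ _ (f (vexp v) i)).
  by have := restr0_le_f C i (vexp_pos v); rewrite /restr0 /proj0 iC.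
rewrite fG /vexp mulrC -expRD ler_expR; exact: h.
Qed.

Lemma lambda_le_final (C : set 'I_n.+1) i0 : i0 \in C ->
  (forall i j, i \in C -> arc i j -> j \in C) -> cw_lambda f <= cw_r (restr0 f C).
Proof.
move=> i0C cC.
apply: cw_lambda_le => x px; apply: cw_r_ge => y py.
pose F k := x k / y k.
have F0 : forall k, 0 <= F k by move=> k; apply: divr_ge0; apply: ltW.
have [k kC tk] := @eq_bigmax _ _ _ 0 i0 (fun k => k \in C) F i0C (fun k _ => F0 k).
set t := \big[Num.max/0]_(k | k \in C) F k in tk.
have Fle : forall j, j \in C -> x j <= t * y j.
  move=> j jC; rewrite -ler_pdivrMr // /t; by apply: le_bigmax_cond.
have t0 : 0 < t by rewrite tk; apply: divr_gt0.
have xk : x k = t * y k by rewrite tk /F divfK // gt_eqF.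
apply: le_trans (min_le_ratio f x k) _.
apply: le_trans (ratio_le_max _ y k).
have key : f x k / t <= ext f (proj0 C y) k.
  apply: lb_le_inf; first by exists (f (fun j => proj0 C y j + 1) k), 1 => //; exact: ltr01.
  move=> _ [e /= e0 <-].
  pose z : vec := fun j => if j \in C then y j + e else x j / t.
  have pz : posvec z.
    move=> j; rewrite /z; case: ifP => _; first by apply: ltr_wpDr => //; apply: ltW.
    by apply: divr_gt0.
  have -> : f (fun j => proj0 C y j + e) k = f z k.
    apply: f_local.
    - move=> j; rewrite /proj0; case: ifP => _; first by apply: ltr_wpDr => //; apply: ltW.
      by rewrite add0r.
    - exact: pz.
    move=> j a; rewrite /proj0 /z (cC k j kC a) //.
  rewrite ler_pdivrMr // mulrC.
  apply: (@le_trans _ _ (f (fun j => t * z j) k)); last by rewrite (fhom pz t0).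
  apply: fop => //; first by move=> j; apply: mulr_gt0.
  move=> j; rewrite /z; case: ifPn => jC; last by rewrite mulrC divfK // gt_eqF.
  apply: le_trans (Fle j jC) _; apply: ler_wpM2l; first exact: ltW.
  by rewrite lerDl ltW.
rewrite /restr0 /proj0 kC xk invfM mulrA.
by apply: ler_wpM2r => //; rewrite invr_ge0 ltW.
Qed.

Lemma argmin_ex (F : 'I_n.+1 -> R) (P : pred 'I_n.+1) i0 : P i0 ->
  exists2 k, P k & forall i, P i -> F k <= F i.
Proof. by move=> Pi0; case: (@arg_minP _ _ _ i0 P F Pi0) => k Pk hk; exists k. Qed.

Lemma argmax_ex (F : 'I_n.+1 -> R) (P : pred 'I_n.+1) i0 : P i0 ->
  exists2 k, P k & forall i, P i -> F i <= F k.
Proof. by move=> Pi0; case: (@arg_maxP _ _ _ i0 P F Pi0) => k Pk hk; exists k. Qed.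

Definition cls (i : 'I_n.+1) : set 'I_n.+1 := [set j | reach arc i j /\ reach arc j i].

Lemma in_cls i j : (j \in cls i) = (j \in scc arc i).
Proof.
apply/idP/idP => h.
  by apply/in_scc; move: h; rewrite in_setE.
by rewrite in_setE; apply/in_scc.
Qed.

Lemma le_sum_vec (x : vec) j : posvec x -> x j <= \sum_l x l.
Proof.
move=> px; rewrite (bigD1 j) //= lerDl; apply: sumr_ge0 => l _; exact: ltW.
Qed.

Lemma claim_r rho : (forall i, cw_r (restr0 f (cls i)) <= rho) ->
  forall S : {set 'I_n.+1}, closed arc S -> forall eps, 0 < eps ->
  exists2 x, posvec x & forall k, k \in S -> f x k <= (rho + eps) * x k.
Proof.
move=> hrho.
suff H : forall m (S : {set 'I_n.+1}), (#|S| < m)%N -> closed arc S -> forall eps, 0 < eps ->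
  exists2 x, posvec x & forall k, k \in S -> f x k <= (rho + eps) * x k.
  by move=> S; apply: (H #|S|.+1).
elim=> [//|m IH] S Sm cS eps eps0.
have [S0|/set0Pn [i0 i0S]] := eqVneq S finset.set0.
  by exists one; [exact: one_pos|move=> k; rewrite S0 inE].
have [i [iS sccS cS']] := top_class cS i0S.
set S' := S :\: scc arc i in cS'.
have S'm : (#|S'| < m)%N.
  rewrite -ltnS; apply: leq_trans Sm; apply: proper_card.
  rewrite finset.properEneq finset.subsetDl andbT; apply/negP => /eqP e.
  by move: iS; rewrite -e inE scc_self.
have [x' px' hx'] := IH S' S'm cS' eps eps0.
set C := cls i.
have [y py hy] : exists2 y, posvec y & max_ratio (restr0 f C) y < rho + eps.
  apply: cw_r_approx; apply: le_lt_trans (hrho i) _; by rewrite ltrDl.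
have [e e0 he] : exists2 e, 0 < e & forall k, k \in scc arc i ->
    f (fun j => proj0 C y j + e) k < (rho + eps) * y k.
  apply: (@fin_unif_pos _ _ (fun k e => k \in scc arc i ->
    f (fun j => proj0 C y j + e) k < (rho + eps) * y k)).
    move=> k e1 e2 h /andP[e20 e21] kC; apply: le_lt_trans (h kC).
    apply: fop.
    - move=> j; apply: ltr_wpDl => //; rewrite /proj0; case: ifP => _ //; exact: ltW.
    - move=> j; apply: ltr_wpDl => //; first (rewrite /proj0; case: ifP => _ //; exact: ltW).
      exact: lt_le_trans e21.
    - by move=> j; rewrite lerD2l.
  move=> k; have [kC|kC] := boolP (k \in scc arc i); last by exists 1 => //; rewrite (negPf kC).
  have hk : ext f (proj0 C y) k < (rho + eps) * y k.
    have := le_lt_trans (ratio_le_max _ y k) hy.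
    by rewrite /restr0 /proj0 in_cls kC ltr_pdivrMr // mulrC.
  have := @inf_lt _ _ _ _ hk; case.
    by exists (f (fun j => proj0 C y j + 1) k), 1 => //; exact: ltr01.
  by move=> _ [e' /= e'0 <-] h; exists e'.
set sx := \sum_l x' l.
have sx0 : 0 < sx by apply: lt_le_trans (le_sum_vec ord0 px'); apply: px'.
set d := e / sx.
have d0 : 0 < d by apply: divr_gt0.
pose x : vec := fun j => if j \in scc arc i then y j else d * x' j.
have px : posvec x.
  by move=> j; rewrite /x; case: ifP => _; [exact: py|apply: mulr_gt0].
exists x => // k kS.
have [kC|kC] := boolP (k \in scc arc i).
  have -> : x k = y k by rewrite /x kC.
  apply: ltW; apply: le_lt_trans (he k kC).
  apply: fop => //.
  - move=> j; apply: ltr_wpDl => //; rewrite /proj0; case: ifP => _ //; exact: ltW.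
  move=> j; rewrite /x /proj0 in_cls; case: ifP => _; first by rewrite lerDl ltW.
  rewrite add0r /d mulrAC ler_pdivrMr // ler_pM2l //; exact: le_sum_vec.
have kS' : k \in S' by rewrite inE kC kS.
have -> : f x k = f (fun j => d * x' j) k.
  apply: f_local => //; first by move=> j; apply: mulr_gt0.
  move=> j a; have := cS' k j kS' a; rewrite inE => /andP[jC _].
  by rewrite /x (negPf jC).
rewrite (fhom px' d0) /= /x (negPf kC).
have := hx' k kS'; have := ltW d0; nra.
Qed.

Definition vmono (P : vec -> vec) := forall u v : vec, (forall k, u k <= v k) -> forall i, P u i <= P v i.
Definition vahom (P : vec -> vec) := forall (u : vec) t i, P (fun k => u k + t) i = P u i + t.

Lemma maxplus (P : vec -> vec) (u : vec) K al (Q : pred 'I_n.+1) : vmono P -> vahom P ->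
  (forall i, Q i -> u i + K.+1%:R * al <= iter K.+1 P u i) ->
  exists v : vec, forall i, Q i -> v i + al <= P v i.
Proof.
move=> mP hP hu.
pose v : vec := fun i => \big[Num.max/u i]_(k < K.+1) (iter k P u i - k%:R * al).
exists v => i Qi.
have key : forall k, (k < K.+1)%N -> iter k.+1 P u i - k%:R * al <= P v i.
  move=> k kK.
  apply: (@le_trans _ _ (P (fun j => iter k P u j + - (k%:R * al)) i)).
    by rewrite hP iterS.
  apply: mP => j; rewrite /v.
  exact: (@le_bigmax _ _ _ (u j) (fun k : 'I_K.+1 => iter k P u j - k%:R * al) (Ordinal kK)).
have hK := key K (ltnSn K).
rewrite -lerBrDr; apply: bigmax_le => [|k _].
  have := hu i Qi; rewrite -natr1 mulrDl mul1r; lra.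
case: k => [[|k] kK] /=.
  have := hu i Qi; rewrite -natr1 mulrDl mul1r mul0r subr0; lra.
have := key k (ltnW kK); rewrite !iterS -natr1 mulrDl mul1r; lra.
Qed.

Lemma minplus (P : vec -> vec) (u : vec) K al : vmono P -> vahom P ->
  (forall i, iter K.+1 P u i <= u i + K.+1%:R * al) ->
  exists v : vec, forall i, P v i <= v i + al.
Proof.
move=> mP hP hu.
pose v : vec := fun i => \big[Num.min/u i]_(k < K.+1) (iter k P u i - k%:R * al).
exists v => i.
have key : forall k, (k < K.+1)%N -> P v i <= iter k.+1 P u i - k%:R * al.
  move=> k kK.
  apply: (@le_trans _ _ (P (fun j => iter k P u j + - (k%:R * al)) i)); last first.
    by rewrite hP iterS.
  apply: mP => j; rewrite /v.
  exact: (@bigmin_le _ _ _ (u j) (Ordinal kK) (fun k : 'I_K.+1 => iter k P u j - k%:R * al)).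
have hK := key K (ltnSn K).
rewrite -lerBlDr; apply: le_bigmin => [|k _].
  have := hu i; rewrite -natr1 mulrDl mul1r; lra.
case: k => [[|k] kK] /=.
  have := hu i; rewrite -natr1 mulrDl mul1r mul0r subr0; lra.
have := key k (ltnW kK); rewrite !iterS -natr1 mulrDl mul1r; lra.
Qed.

Lemma irreducible i g0 : closed arc (scc arc i) -> 0 < g0 ->
  g0 < cw_r (restr0 f (cls i)) ->
  exists v : vec, forall j, j \in scc arc i -> v j + ln g0 <= G v j.
Proof.
move=> cC g00 gr.
set r := cw_r (restr0 f (cls i)) in gr.
have r0 : 0 < r by apply: lt_trans gr.
set al := ln g0.
set be := ln r.
have albe : al < be by rewrite /al /be ltr_ln ?posrE.
set a := - (`|al| + 1).
have hal : al <= `|al| := ler_norm al.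
have hal2 : - `|al| <= al by rewrite lerNl -normrN ler_norm.
have a0 : a < 0 by rewrite /a oppr_lt0; apply: ltr_wpDl.
have aal : a < al by rewrite /a; lra.
pose H (u : vec) j := Num.max (G u j) (u j + a).
pose P (u : vec) : vec := fun j => if j \in scc arc i then H u j else H u i.
have iC : i \in scc arc i := scc_self arc i.
have mH : forall u v : vec, (forall k, u k <= v k) -> forall j, H u j <= H v j.
  by move=> u v uv j; apply: le_max2; [exact: G_mono|rewrite lerD2r].
have mP : vmono P by move=> u v uv j; rewrite /P; case: ifP => _; apply: mH.
have hH : forall (u : vec) t j, H (fun k => u k + t) j = H u j + t.
  by move=> u t j; rewrite /H G_shift addr_maxl addrAC.
have hP : vahom P by move=> u t j; rewrite /P; case: ifP => _; apply: hH.
have [c [K [c0 c1 K0 hcK]]] := arc_unif.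
have [D [D0 hD]] := reach_unif arc.
pose u k := iter k P (fun _ => 0).
have uS : forall k, u k.+1 = P (u k) by move=> k; rewrite /u iterS.
pose Mx k := vmax (u k).
pose mn k := vmin (u k).
set A := Num.max (vmax (G (fun _ => 0))) a.
have F1 : forall (w : vec) j, P w j <= vmax w + A.
  move=> w j.
  have HA : forall j', H w j' <= vmax w + A.
    move=> j'; rewrite /H ge_max; apply/andP; split.
      apply: (@le_trans _ _ (G (fun k => (fun _ => 0) k + vmax w) j')).
        by apply: G_mono => k; rewrite add0r le_vmax.
      rewrite G_shift addrC lerD2l; apply: le_trans (le_vmax _ j') _.
      by rewrite le_max lexx.
    have := le_vmax w j'; have : a <= A by rewrite le_max lexx orbT.
    lra.
  by rewrite /P; case: ifP.
have F1v : forall w, vmax (P w) <= vmax w + A.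
  by move=> w; have [j ->] := vmax_attained (P w); apply: F1.
have F1D : forall k d, Mx (k + d)%N <= Mx k + d%:R * A.
  move=> k; elim=> [|d IH]; first by rewrite addn0 mul0r addr0.
  rewrite addnS /Mx uS; apply: le_trans (F1v _) _; rewrite -natr1 mulrDl mul1r.
  move: IH; rewrite /Mx; lra.
have F2 : forall (w : vec) j, vmin w + a <= P w j.
  move=> w j; rewrite /P /H; case: ifP => _; rewrite le_max; apply/orP; right;
  by rewrite lerD2r vmin_le.
have F2v : forall w, vmin w + a <= vmin (P w).
  by move=> w; have [j ->] := vmin_attained (P w); apply: F2.
have F2D : forall k d, mn k + d%:R * a <= mn (k + d)%N.
  move=> k; elim=> [|d IH]; first by rewrite addn0 mul0r addr0.
  rewrite addnS /mn uS; apply: le_trans (F2v _); rewrite -natr1 mulrDl mul1r.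
  move: IH; rewrite /mn; lra.
have F5 : forall (w : vec) j, j \in scc arc i -> w j + a <= P w j.
  by move=> w j jC; rewrite /P jC /H le_max lexx orbT.
have F5D : forall k d j, j \in scc arc i -> u k j + d%:R * a <= u (k + d)%N j.
  move=> k d j jC; elim: d => [|d IH]; first by rewrite addn0 mul0r addr0.
  rewrite addnS uS; apply: le_trans (F5 _ _ jC); rewrite -natr1 mulrDl mul1r.
  move: IH; lra.
have Pout : forall (w : vec) j, j \notin scc arc i -> P w j = P w i.
  by move=> w j jC; rewrite /P (negPf jC) iC.
have F3 : forall k, exists2 l, l \in scc arc i & u k l = Mx k.
  move=> k; have [l hl] := vmax_attained (u k).
  have [lC|lC] := boolP (l \in scc arc i); first by exists l.
  exists i => //; rewrite /Mx hl; case: k {hl} => [|k]; first by [].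
  by rewrite uS Pout.
have Fprop : forall d j l, reachn arc d j l -> j \in scc arc i -> forall k,
    mn k + d%:R * a + c ^+ d * (u k l - mn k) - d%:R * K <= u (k + d)%N j.
  move=> d j l; elim=> {d j l} [j jC k|d j j1 l a' rd IH jC k].
    rewrite addn0 expr0 mul1r !mul0r addr0 subr0; lra.
  have j1C : j1 \in scc arc i := cC j j1 jC a'.
  have IHk := IH j1C k.
  rewrite addnS uS /P jC /H le_max; apply/orP; left.
  have hp := prop_lower hcK a' (fun k' => vmin_le (u (k + d)%N) k').
  have h2 := F2D k d.
  have h3 : (1 - c) * (mn k + d%:R * a) <= (1 - c) * mn (k + d)%N.
    by apply: ler_wpM2l; rewrite ?subr_ge0.
  have h4 : c * (mn k + d%:R * a + c ^+ d * (u k l - mn k) - d%:R * K) <= c * u (k + d)%N j1.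
    by apply: ler_wpM2l => //; apply: ltW.
  have h5 : 0 <= (1 - c) * (d%:R * K) by apply: mulr_ge0; rewrite ?subr_ge0 ?mulr_ge0.
  move: hp; rewrite /mn in h2 h3 h4 *; rewrite exprS -natr1; lra.
have F6 : forall k, mn k + c ^+ D * (Mx k - mn k) - D%:R * (K - a) <= mn (k + D)%N.
  move=> k.
  have hC : forall j, j \in scc arc i ->
      mn k + c ^+ D * (Mx k - mn k) - D%:R * (K - a) <= u (k + D)%N j.
    move=> j jC; have [l lC ul] := F3 k.
    have rjl : reach arc j l.
      by case/in_scc: jC => _ rji; case/in_scc: lC => ril _; apply: reach_trans rji ril.
    have [d [dD rd]] := hD j l rjl.
    have h1 := Fprop d j l rd jC k; rewrite ul in h1.
    have h2 := F5D (k + d)%N (D - d)%N j jC; rewrite -addnA subnKC // in h2.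
    have h3 : c ^+ D <= c ^+ d by apply: ler_wiXn2l => //; apply: ltW.
    have s0 : 0 <= Mx k - mn k by rewrite subr_ge0 -ul /mn; apply: vmin_le.
    have h4 : c ^+ D * (Mx k - mn k) <= c ^+ d * (Mx k - mn k) by apply: ler_wpM2r.
    have h5 : d%:R * K <= D%:R * K by apply: ler_wpM2r => //; rewrite ler_nat.
    move: h2; rewrite natrB //; lra.
  have [j hj] := vmin_attained (u (k + D)%N).
  rewrite /mn hj; have [jC|jC] := boolP (j \in scc arc i); first exact: hC.
  rewrite -(prednK D0) addnS uS Pout // -uS -addnS prednK //; exact: hC.
have [B hB] := spread_bound D0 (exprn_gt0 D c0) (exprn_ile1 D (ltW c0) c1) (fun k => F1D k D) F6.
have F7 : forall k gm, expR gm < r -> exists j, k.+1%:R * gm < u k.+1 j.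
  move=> k gm hgm; apply: contrapT => hn.
  have hall : forall j, iter k.+1 P (fun _ => 0) j <= (fun _ => 0) j + k.+1%:R * gm.
    move=> j; rewrite add0r leNgt; apply/negP => hj; apply: hn; exists j; exact: hj.
  have [v hv] := minplus mP hP hall.
  have : r <= expR gm.
    apply: (@r_le_expR _ _ v) => j; rewrite in_cls => jC.
    by apply: le_trans (hv j); rewrite /P jC /H le_max lexx.
  lra.
set gm := (al + be) / 2.
have er : expR be = r by rewrite /be lnK // posrE.
have hgm : expR gm < r by rewrite -er ltr_expR /gm; lra.
have gmal : al < gm by rewrite /gm; lra.
have B0 : 0 <= B.
  apply: le_trans (hB 0%N); rewrite subr_ge0 /Mx /mn.
  exact: le_trans (vmin_le _ ord0) (le_vmax _ ord0).
set x := B / (gm - al).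
have x0 : 0 <= x by apply: divr_ge0 => //; rewrite subr_ge0 ltW.
have hN := archi_boundP x0.
set N := Num.bound x in hN.
have F8 : forall j, (fun _ => 0) j + N.+1%:R * al <= iter N.+1 P (fun _ => 0) j.
  move=> j; rewrite add0r.
  have [j0 hj0] := F7 N gm hgm.
  have hs := hB N.+1.
  have h1 : mn N.+1 <= u N.+1 j by apply: vmin_le.
  have h2 : u N.+1 j0 <= Mx N.+1 by apply: le_vmax.
  have h3 : B <= N.+1%:R * (gm - al).
    have -> : B = x * (gm - al) by rewrite /x divfK // gt_eqF // subr_gt0.
    apply: ler_wpM2r; first by rewrite subr_ge0 ltW.
    apply: ltW; apply: lt_le_trans hN _; rewrite ler_nat; exact: leqnSn.
  rewrite -/(u N.+1); move: h3; rewrite mulrBr; lra.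
have [v hv] := @maxplus P (fun _ => 0) N al predT mP hP (fun j _ => F8 j).
exists v => j jC.
have := hv j isT; rewrite /P jC /H le_max => /orP[//|h].
lra.
Qed.

Lemma G_lower (w : vec) j a1 : (forall k, a1 <= G (fun _ => 0) k) -> vmin w + a1 <= G w j.
Proof.
move=> ha.
apply: (@le_trans _ _ (G (fun k => (fun _ => 0) k + vmin w) j)); last first.
  by apply: G_mono => k; rewrite add0r vmin_le.
by rewrite G_shift; have := ha j; lra.
Qed.

Lemma claim_l g0 : 0 < g0 ->
  (forall i, closed arc (scc arc i) -> g0 < cw_r (restr0 f (cls i))) ->
  forall S : {set 'I_n.+1}, closed arc S ->
  exists u : vec, forall k, k \in S -> u k + ln g0 <= G u k.
Proof.
move=> g00 hg.
suff H : forall m (S : {set 'I_n.+1}), (#|S| < m)%N -> closed arc S ->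
  exists u : vec, forall k, k \in S -> u k + ln g0 <= G u k.
  by move=> S; apply: (H #|S|.+1).
set al := ln g0.
elim=> [//|m IH] S Sm cS.
have [S0|/set0Pn [i0 i0S]] := eqVneq S finset.set0.
  by exists (fun _ => 0) => k; rewrite S0 inE.
have [i [iS sccS cS']] := top_class cS i0S.
set S' := S :\: scc arc i in cS'.
have S'm : (#|S'| < m)%N.
  rewrite -ltnS; apply: leq_trans Sm; apply: proper_card.
  rewrite finset.properEneq finset.subsetDl andbT; apply/negP => /eqP e.
  by move: iS; rewrite -e inE scc_self.
have [u' hu'] := IH S' S'm cS'.
have inS : forall k, k \in S -> k \notin scc arc i -> k \in S'.
  by move=> k kS kC; rewrite inE kC kS.
have S'C : forall k, k \in S' -> k \notin scc arc i.
  by move=> k; rewrite inE => /andP[].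
have [cCi|ncCi] := pselect (closed arc (scc arc i)).
  have [v hv] := irreducible cCi g00 (hg i cCi).
  exists (fun j => if j \in scc arc i then v j else u' j) => k kS.
  have [kC|kC] := boolP (k \in scc arc i).
    rewrite (@G_local _ v k); first exact: hv.
    by move=> j a; rewrite (cCi k j kC a).
  rewrite (@G_local _ u' k); first exact: hu' (inS k kS kC).
  by move=> j a; rewrite (negPf (S'C j (cS' k j (inS k kS kC) a))).
have [k0 [l0 [k0C al0 l0C]]] : exists k0 l0, [/\ k0 \in scc arc i, arc k0 l0 & l0 \notin scc arc i].
  apply: contrapT => hn; apply: ncCi => a b aC ab.
  have [//|bC] := boolP (b \in scc arc i); exfalso; apply: hn; by exists a, b; split.
have l0S' : l0 \in S'.
  apply: inS => //; apply: cS al0; exact: (fintype.subsetP sccS).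
have [c [Kc [c0 c1 Kc0 hcK]]] := arc_unif.
have [D [D0 hD]] := reach_unif arc.
set a1 := Num.min (Num.min 0 (vmin (G (fun _ => 0)))) al.
have a10 : a1 <= 0 by rewrite /a1 !ge_min lexx.
have a1al : a1 <= al by rewrite /a1 ge_min lexx orbT.
have a1G : forall k, a1 <= G (fun _ => 0) k.
  by move=> k; rewrite /a1 !ge_min; apply/orP; left; apply/orP; right; apply: vmin_le.
have hal : - `|al| <= al by rewrite lerNl -normrN ler_norm.
set b0 := vmin u' - D%:R * `|al|.
have cD0 : 0 < c ^+ D by apply: exprn_gt0.
set X := D%:R * (al - a1) + D%:R * Kc.
have X0 : 0 <= X by apply: addr_ge0; apply: mulr_ge0; rewrite ?subr_ge0.
set T := Num.max (- vmin u') (X / c ^+ D - b0 + D%:R * a1).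
have T1 : - vmin u' <= T by rewrite le_max lexx.
have T2 : X / c ^+ D - b0 + D%:R * a1 <= T by rewrite le_max lexx orbT.
have XcD : X <= c ^+ D * (b0 + T - D%:R * a1).
  rewrite -ler_pdivrMl //; rewrite mulrC; lra.
have Xc0 : 0 <= X / c ^+ D by apply: divr_ge0 => //; apply: ltW.
pose u0 : vec := fun j => if j \in S' then u' j else - T.
pose ut t := iter t G u0.
have utS : forall t, ut t.+1 = G (ut t) by move=> t; rewrite /ut iterS.
set L := - T + D%:R * a1.
have S1 : forall t j, j \in S' -> u' j + t%:R * al <= ut t j.
  elim=> [|t IHt] j jS'.
    by rewrite /ut /= /u0 jS' mul0r addr0.
  rewrite utS.
  apply: (@le_trans _ _ (G (fun k => if k \in S' then u' k + t%:R * al else ut t k) j)); last first.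
    by apply: G_mono => k; case: ifP => kS'; [exact: IHt|].
  rewrite (@G_local _ (fun k => u' k + t%:R * al) j); last first.
    by move=> k a; rewrite (cS' j k jS' a).
  rewrite G_shift -natr1 mulrDl mul1r; have := hu' j jS'; lra.
have S2' : forall t j, - T + t%:R * a1 <= ut t j.
  elim=> [|t IHt] j.
    rewrite /ut /= /u0 mul0r addr0; case: ifP => // jS'.
    by have := vmin_le u' j; lra.
  rewrite utS; apply: le_trans (@G_lower (ut t) j a1 a1G).
  have [k hk] := vmin_attained (ut t); rewrite hk -natr1 mulrDl mul1r.
  by have := IHt k; lra.
have S2 : forall t, (t <= D)%N -> forall j, L <= ut t j.
  move=> t tD j; apply: le_trans (S2' t j); rewrite /L lerD2l.
  by apply: ler_wnM2r => //; rewrite ler_nat.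
have S3 : forall t j, j \in S' -> (t <= D)%N -> b0 <= ut t j.
  move=> t j jS' tD; apply: le_trans (S1 t j jS').
  have h1 := vmin_le u' j.
  have h2 : t%:R * `|al| <= D%:R * `|al| by apply: ler_wpM2r; rewrite ?normr_ge0 ?ler_nat.
  have h3 : - (t%:R * `|al|) <= t%:R * al.
    by rewrite -mulrN; apply: ler_wpM2l.
  rewrite /b0; lra.
have S4 : forall d j l, reachn arc d j l -> l \in S' -> forall t, (d <= t)%N -> (t <= D)%N ->
    L + c ^+ d * (b0 - L) - d%:R * Kc <= ut t j.
  move=> d j l; elim=> {d j l} [j jS' t _ tD|d j j1 l a' rd IHr lS' t dt tD].
    by rewrite expr0 mul1r mul0r subr0 addrC subrK; apply: S3.
  case: t dt tD => [//|t] dt tD.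
  have IHt := IHr lS' t dt (ltnW tD).
  rewrite utS; apply: le_trans (prop_lower hcK a' (S2 t (ltnW tD))).
  have h1 : c * (L + c ^+ d * (b0 - L) - d%:R * Kc) <= c * ut t j1.
    by apply: ler_wpM2l => //; apply: ltW.
  have h2 : c * (d%:R * Kc) <= d%:R * Kc by apply: ler_piMl => //; rewrite mulr_ge0.
  move: h1; rewrite exprS -natr1; lra.
have S5 : forall j, j \in scc arc i -> u0 j + D%:R * al <= ut D j.
  move=> j jC.
  have rj : reach arc j l0.
    case/in_scc: jC => _ rji; case/in_scc: k0C => rik0 _.
    exact: reach_trans (reach_trans rji rik0) (reach1 al0).
  have [d [dD rd]] := hD j l0 rj.
  have h := S4 d j l0 rd l0S' D dD (leqnn D).
  have bL : 0 <= b0 - L by rewrite /L; lra.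
  have h3 : c ^+ D <= c ^+ d by apply: ler_wiXn2l => //; apply: ltW.
  have h4 : c ^+ D * (b0 - L) <= c ^+ d * (b0 - L) by apply: ler_wpM2r.
  have h5 : d%:R * Kc <= D%:R * Kc by apply: ler_wpM2r => //; rewrite ler_nat.
  have jS' : j \notin S' by apply/negP => /S'C; rewrite jC.
  have -> : u0 j = - T by rewrite /u0 (negPf jS').
  move: XcD; rewrite /L /X in h h4 bL *; lra.
have mG : vmono G by move=> u v uv k; apply: G_mono.
have hG : vahom G by move=> u t k; apply: G_shift.
have hyp : forall j, j \in S -> u0 j + D.-1.+1%:R * al <= iter D.-1.+1 G u0 j.
  rewrite prednK // => j jS.
  have [jC|jC] := boolP (j \in scc arc i); first exact: S5.
  have jS' := inS j jS jC.
  by rewrite {1}/u0 jS'; apply: S1.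
have [v hv] := maxplus mG hG hyp.
by exists v.
Qed.

Lemma min_ratio_pos (x : vec) : posvec x -> 0 < min_ratio f x.
Proof.
move=> px; apply/bigmin_gtP; split; first by apply: divr_gt0; [apply: fpos|].
by move=> k _; apply: divr_gt0; [apply: fpos|].
Qed.

Lemma max_ratio_ge0 (x : vec) : posvec x -> 0 <= max_ratio f x.
Proof.
move=> px; apply: le_trans (ratio_le_max f x ord0); apply: ltW.
by apply: divr_gt0; [apply: fpos|].
Qed.

Lemma min_le_max (x y : vec) : posvec x -> posvec y -> min_ratio f x <= max_ratio f y.
Proof.
move=> px py.
have [k _ hk] := @argmax_ex (fun j => x j / y j) predT ord0 isT.
set t := x k / y k in hk.
have t0 : 0 < t by apply: divr_gt0.
have xk : x k = t * y k by rewrite /t divfK // gt_eqF.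
apply: le_trans (min_le_ratio f x k) _; apply: le_trans (ratio_le_max f y k).
have : f x k <= t * f y k.
  apply: (@le_trans _ _ (f (fun j => t * y j) k)); last by rewrite (fhom py t0).
  apply: fop => //; first by move=> j; apply: mulr_gt0.
  by move=> j; rewrite -ler_pdivrMr //; apply: hk.
move=> h; rewrite xk invfM mulrA ler_wpM2r //; first by rewrite invr_ge0 ltW.
by rewrite ler_pdivrMr // mulrC.
Qed.

Lemma closed_setT : closed arc [set: 'I_n.+1].
Proof. by move=> i j _ _; rewrite inE. Qed.

Lemma cls_closed i : closed arc (scc arc i) ->
  forall a b, a \in cls i -> arc a b -> b \in cls i.
Proof. by move=> cC a b; rewrite !in_cls; apply: cC. Qed.

Lemma main_thm :
  ((exists2 C, is_scc arc C & cw_r f = cw_r (restr0 f C)) /\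
   (forall C, is_scc arc C -> cw_r (restr0 f C) <= cw_r f)) /\
  ((exists2 C, is_final arc C & cw_lambda f = cw_r (restr0 f C)) /\
   (forall C, is_final arc C -> cw_lambda f <= cw_r (restr0 f C))).
Proof.
split; split.
- have [k _ hk] := @argmax_ex (fun i => cw_r (restr0 f (cls i))) predT ord0 isT.
  exists (cls k); first by exists k.
  apply/eqP; rewrite eq_le r_sub_le andbT.
  apply/ler_addgt0Pr => e e0.
  have [x px hx] := claim_r (fun i => hk i isT) closed_setT e0.
  apply: le_trans (cw_r_le max_ratio_ge0 px) _.
  apply: max_ratio_le => j; rewrite ler_pdivrMr //; apply: hx; by rewrite inE.
- by move=> C _; apply: r_sub_le.
- have [i0 ci0] := final_exists arc.
  have [k Pk hk] := @argmin_ex (fun i => cw_r (restr0 f (cls i)))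
    (fun i => `[< closed arc (scc arc i) >]) i0 (asboolT ci0).
  have cCk := asboolW Pk.
  exists (cls k).
    split; first by exists k.
    move=> a b ha ab; have h := @cls_closed k cCk a b.
    by rewrite !in_setE in h; apply: h.
  apply/eqP; rewrite eq_le; apply/andP; split.
    apply: (@lambda_le_final _ k); first by rewrite in_cls scc_self.
    exact: cls_closed.
  rewrite leNgt; apply/negP => hlt.
  set lam := cw_lambda f in hlt.
  have lam0 : 0 < lam.
    apply: lt_le_trans (min_ratio_pos one_pos) _.
    exact: (@cw_lambda_ge f one (max_ratio f one) (fun y py => min_le_max py one_pos) one_pos).
  set g0 := (lam + cw_r (restr0 f (cls k))) / 2.
  have g00 : 0 < g0 by rewrite /g0; lra.
  have hg : forall i, closed arc (scc arc i) -> g0 < cw_r (restr0 f (cls i)).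
    move=> i ci; apply: lt_le_trans (hk i (asboolT ci)); rewrite /g0; lra.
  have [u hu] := claim_l g00 hg closed_setT.
  have : min_ratio f (vexp u) <= lam.
    exact: (@cw_lambda_ge f (vexp u) (max_ratio f one) (fun y py => min_le_max py one_pos) (vexp_pos u)).
  have : g0 <= min_ratio f (vexp u).
    apply: le_min_ratio => j; rewrite ler_pdivlMr; last exact: vexp_pos.
    rewrite fG /vexp mulrC -[g0 in _ * g0]lnK ?posrE // -expRD ler_expR.
    by apply: hu; rewrite inE.
  rewrite /g0; lra.
- move=> C [[i ->] cC].
  apply: (@lambda_le_final _ i); first by rewrite in_setE; split; apply: reach_refl.
  by move=> a b; rewrite !in_setE; apply: cC.
Qed.

End Main.

Unset Implicit Arguments. Set Strict Implicit.

Theorem theorem4p3 (R : realType) (n : nat) (f : ('I_n.+1 -> R) -> ('I_n.+1 -> R))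
  (fpos : forall x, posvec x -> posvec (f x))
  (fop : order_preserving f) (fhom : homogeneous f) (fconv : mult_convex f) :
  ((exists2 C, is_scc (gf_arc f) C & cw_r f = cw_r (restr0 f C)) /\
   (forall C, is_scc (gf_arc f) C -> cw_r (restr0 f C) <= cw_r f)) /\
  ((exists2 C, is_final (gf_arc f) C & cw_lambda f = cw_r (restr0 f C)) /\
   (forall C, is_final (gf_arc f) C -> cw_lambda f <= cw_r (restr0 f C))).
Proof. exact: main_thm. Qed.
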